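(* Let $\mathsf{G}=(N,E,w)$ be a strongly connected weighted directed graph on $N=\{1,\dots,n\}$ with Laplacian $\mathbf{L}$, and consider the linear consensus system $\dot{\bm{x}}(t)=-\mathbf{L}\bm{x}(t)$, $\bm{x}(t)\in\mathbb{R}^n$. Let $\bm{q}$ be its left Perron vector. Let $H:\mathbb{R}\to\mathbb{R}$ be a continuous function and let $\beta>0$, $c>0$. Then the additive function $$V(\bm{x})=\beta\sum_{i=1}^n q_i\,H(c\,x_i)$$ is a strict Lyapunov function for the consensus system if and only if $H$ is strictly convex.
   Context: A weighted directed graph $\mathsf{G}=(N,E,w)$ has node set $N=\{1,\dots,n\}$, edge set $E\subseteq N\times N$ of ordered pairs, and positive weights $w_{ij}>0$ for $(i,j)\in E$. Its Laplacian $\mathbf{L}=[l_{ij}]$ is defined by $l_{ij}=-w_{ij}$ if $(i,j)\in E$ ($i\neq j$), $l_{ij}=0$ if $i\ne j$ and $(i,j)\notin E$, and $l_{ii}=\sum_{j:(i,j)\in E}w_{ij}$; thus $\dot x_i=\sum_{j:(i,j)\in E}w_{ij}(x_j-x_i)$. The graph (and the consensus system) is called strongly connected/irreducible if $\mathrm{rank}(\mathbf{L})=n-1$. The flow $\mathbf{P}^{(t)}=e^{-\mathbf{L}t}$, $t\ge 0$, is a row-stochastic matrix. The left Perron vector $\bm{q}\in\mathbb{R}^n$ is the vector with $\bm{q}^\top\mathbf{L}=\bm{0}^\top$, $q_i>0$ for all $i$, and $\sum_i q_i=1$. The equilibria of the system are the consensus vectors $a\bm{1}$, $a\in\mathbb{R}$.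 A strict Lyapunov function is a function $V$ such that along every trajectory with $\bm{x}(0)$ not an equilibrium, $V(\bm{x}(t))<V(\bm{x}(0))$ for every $0<t<\infty$. *)

(* Defs.v *)
From HB Require Import structures.
From mathcomp Require Import all_boot all_order all_algebra.
From mathcomp Require Import all_classical all_reals all_analysis.
Set Implicit Arguments. Unset Strict Implicit. Unset Printing Implicit Defensive.
Import Order.TTheory GRing.Theory Num.Theory numFieldNormedType.Exports.
Local Open Scope ring_scope.
Local Open Scope classical_set_scope.

Section Defs.
Variable R : realType.

Definition laplacian (n : nat) (E : rel 'I_n) (w : 'I_n -> 'I_n -> R)
  : 'M[R]_n :=
  \matrix_(i, j) (if i == j then \sum_(k | E i k && (k != i)) w i k
                  else if E i j then - w i j else 0).

Definition left_perron (n : nat) (L : 'M[R]_n) (q : 'I_n -> R) : Prop :=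
  (\row_i q i) *m L = 0 /\ (forall i, 0 < q i) /\ \sum_i q i = 1.

Definition is_trajectory (n : nat) (L : 'M[R]_n) (x : R -> 'I_n -> R) : Prop :=
  (forall i, {within [set t : R | 0 <= t], continuous (fun t => x t i)}) /\
  (forall i t, 0 < t ->
     derivable (fun s => x s i) t 1 /\
     (fun s => x s i)^`() t = - \sum_j L i j * x t j).

Definition consensus (n : nat) (v : 'I_n -> R) : Prop :=
  exists a : R, forall i, v i = a.

Definition strict_lyapunov (n : nat) (L : 'M[R]_n) (V : ('I_n -> R) -> R)
  : Prop :=
  forall x : R -> 'I_n -> R, is_trajectory L x -> ~ consensus (x 0) ->
    forall t, 0 < t -> V (x t) < V (x 0).

Definition strictly_convex (H : R -> R) : Prop :=
  forall x y : R, x != y -> forall l : R, 0 < l < 1 ->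
    H (l * x + (1 - l) * y) < l * H x + (1 - l) * H y.

End Defs.

(* Main.v *)
Require Import Defs.
From HB Require Import structures.
From mathcomp Require Import all_boot all_order all_algebra.
From mathcomp Require Import all_classical all_reals all_analysis.
From mathcomp Require Import ring lra.
Import Order.TTheory GRing.Theory Num.Theory numFieldNormedType.Exports.
Local Open Scope ring_scope.
Local Open Scope classical_set_scope.
Set Implicit Arguments. Unset Strict Implicit.

Section P0.
Variable R : realType.
Implicit Types H : R -> R.

Definition convex_fun H := forall a b l : R, 0 <= l <= 1 ->
  H (l * a + (1 - l) * b) <= l * H a + (1 - l) * H b.

Lemma sconv_conv H : strictly_convex H -> convex_fun H.
Proof.
move=> sc a b l /andP[l0 l1].
have [->|ab] := eqVneq a b.
  by rewrite -mulrDl -mulrDl subrKC !mul1r.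
have [->|ln0] := eqVneq l 0.
  by rewrite !mul0r !add0r subr0 !mul1r.
have [->|ln1] := eqVneq l 1.
  by rewrite subrr !mul0r !addr0 !mul1r.
apply/ltW/sc => //; apply/andP; split; first by rewrite lt0r ln0.
by rewrite lt_neqAle ln1.
Qed.

Definition Gap H (a b : R) := (H a + H b) / 2 - H ((a + b) / 2).

Lemma Gap_ge0 H a b : convex_fun H -> 0 <= Gap H a b.
Proof.
move=> cv; rewrite /Gap subr_ge0.
have := cv a b (1/2); rewrite (_ : 1 - 1/2 = 1/2 :> R); last by field.
move=> /(_ _) h.
have -> : (a + b) / 2 = 1/2 * a + 1/2 * b by field.
have -> : (H a + H b) / 2 = 1/2 * H a + 1/2 * H b by field.
apply: h; apply/andP; split; lra.
Qed.

Lemma Gap_gt0 H a b : strictly_convex H -> a != b -> 0 < Gap H a b.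
Proof.
move=> sc ab; rewrite /Gap subr_gt0.
have := sc a b ab (1/2); rewrite (_ : 1 - 1/2 = 1/2 :> R); last by field.
move=> /(_ _) h.
have -> : (a + b) / 2 = 1/2 * a + 1/2 * b by field.
have -> : (H a + H b) / 2 = 1/2 * H a + 1/2 * H b by field.
apply: h; apply/andP; split; lra.
Qed.

Lemma two_point H a b lam : convex_fun H -> 0 <= lam -> lam <= 1/2 ->
  H ((1 - lam) * a + lam * b) <=
  (1 - lam) * H a + lam * H b - 2 * lam * Gap H a b.
Proof.
move=> cv l0 l1.
have := cv a ((a + b) / 2) (1 - 2 * lam).
have -> : (1 - 2 * lam) * a + (1 - (1 - 2 * lam)) * ((a + b) / 2)
   = (1 - lam) * a + lam * b by field.
move=> /(_ _) h.
have h' := h ltac:(apply/andP; split; lra).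
apply: le_trans h' _; rewrite /Gap.
have -> : (1 - (1 - 2 * lam)) = 2 * lam by ring.
have -> : (1 - lam) * H a + lam * H b -
  2 * lam * ((H a + H b) / 2 - H ((a + b) / 2)) =
  (1 - 2 * lam) * H a + 2 * lam * H ((a + b) / 2) by field.
by [].
Qed.

Lemma psum_zero (I : Type) (r : seq I) (P : pred I) (p f : I -> R) :
  (forall i, P i -> 0 <= p i) -> \sum_(i <- r | P i) p i = 0 ->
  \sum_(i <- r | P i) p i * f i = 0.
Proof.
elim: r => [|j r IH] p0; first by rewrite !big_nil.
rewrite !big_cons; case: ifP => Pj; last exact: IH.
move=> /eqP; rewrite paddr_eq0 ?p0 //; last by apply: sumr_ge0.
by move=> /andP[/eqP -> /eqP /IH ->]; rewrite ?mul0r ?addr0.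
Qed.

Lemma jensen_aux H (I : Type) (r : seq I) (P : pred I) (p z : I -> R) :
  convex_fun H -> (forall i, P i -> 0 <= p i) ->
  0 < \sum_(i <- r | P i) p i ->
  (\sum_(i <- r | P i) p i) * H ((\sum_(i <- r | P i) p i * z i) /
     (\sum_(i <- r | P i) p i)) <= \sum_(i <- r | P i) p i * H (z i).
Proof.
move=> cv p0; elim: r => [|j r IH]; first by rewrite big_nil ltxx.
rewrite !big_cons; case: ifP => Pj; last exact: IH.
set S' := \sum_(i <- r | P i) p i.
have S'0 : 0 <= S' by apply: sumr_ge0.
have pj0 := p0 _ Pj.
move=> Spos.
have [S'z|S'p] := eqVneq S' 0.
  rewrite S'z !addr0 (@psum_zero _ _ _ _ z p0 S'z) (@psum_zero _ _ _ _ (fun i => H (z i)) p0 S'z) !addr0.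
  have pjn : p j != 0 by move: Spos; rewrite S'z addr0 lt0r => /andP[].
  by rewrite [p j * z j]mulrC mulfK.
have S'pos : 0 < S' by rewrite lt0r S'p.
set Z := \sum_(i <- r | P i) p i * z i.
set Y := \sum_(i <- r | P i) p i * H (z i).
have IH' := IH S'pos.
set u := Z / S'.
have hl : 0 <= p j / (p j + S') <= 1.
  apply/andP; split; first by apply: divr_ge0; lra.
  by rewrite ler_pdivrMr //; lra.
have := cv (z j) u _ hl.
have e1 : p j / (p j + S') * z j + (1 - p j / (p j + S')) * u
   = (p j * z j + Z) / (p j + S').
  rewrite /u; field; apply/andP; split => //; lra.
rewrite e1 => hc.
have : (p j + S') * H ((p j * z j + Z) / (p j + S')) <=
   (p j + S') * (p j / (p j + S') * H (z j) + (1 - p j / (p j + S')) * H u).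
  by rewrite ler_pM2l.
move=> h2; apply: le_trans h2 _.
have -> : (p j + S') * (p j / (p j + S') * H (z j) + (1 - p j / (p j + S')) * H u)
   = p j * H (z j) + S' * H u.
  field; lra.
by rewrite lerD2l.
Qed.

Lemma jensen H (I : Type) (r : seq I) (P : pred I) (p z : I -> R) :
  convex_fun H -> (forall i, P i -> 0 <= p i) ->
  \sum_(i <- r | P i) p i = 1 ->
  H (\sum_(i <- r | P i) p i * z i) <= \sum_(i <- r | P i) p i * H (z i).
Proof.
move=> cv p0 s1.
have := @jensen_aux H I r P p z cv p0; rewrite s1 ltr01 divr1 mul1r; exact.
Qed.

End P0.

Section P0b.
Variable R : realType.
Implicit Types H : R -> R.

Lemma cont_ed (f : R -> R) u : {for u, continuous f} ->
  forall e : R, 0 < e -> exists2 d : R, 0 < d & forall v, `|v - u| < d -> `|f v - f u| < e.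
Proof.
move=> cf e e0.
have := cf; move/cvgrPdist_lt => /(_ e e0).
move=> /nbhs_ballP [d d0 Hd]; exists d => // v Hv.
rewrite distrC; apply: Hd; rewrite /ball /= distrC //.
Qed.

Lemma dini_mono (W : R -> R) s t : s <= t ->
 (forall u, s <= u <= t -> forall e, 0 < e -> exists2 d, 0 < d &
     forall v, s <= v <= t -> `|v - u| < d -> `|W v - W u| < e) ->
 (forall u, s <= u < t -> forall e, 0 < e -> exists2 d, 0 < d &
     forall h, 0 < h < d -> W (u + h) <= W u + e * h) ->
 W t <= W s.
Proof.
move=> st cW dW.
have key : forall eps, 0 < eps -> W t <= W s + eps * (t - s).
  move=> eps eps0.
  pose A := [set u | s <= u <= t /\ W u <= W s + eps * (u - s)].
  have As : A s by split; [rewrite lexx st | rewrite subrr mulr0 addr0].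
  have ubt : ubound A t by move=> x [/andP[_ ->]].
  have hA : has_sup A by split; [exists s | exists t].
  set u := sup A.
  have su : s <= u by apply: (sup_upper_bound hA).
  have ut : u <= t by apply: ge_sup => //; exists s.
  have inA : W u <= W s + eps * (u - s).
    rewrite leNgt; apply/negP => hlt.
    set g := W u - (W s + eps * (u - s)).
    have g0 : 0 < g by rewrite subr_gt0.
    have [d d0 hd] := cW u ltac:(by rewrite su ut) g g0.
    have [v Av hv] := sup_adherent d0 hA.
    rewrite -/u in hv.
    have vu : v <= u by apply: (sup_upper_bound hA).
    case: Av => /andP[sv vt] Wv.
    have := hd v ltac:(by rewrite sv vt) ltac:(rewrite ler0_norm; lra).
    rewrite ltr_norml => /andP[h1 _].
    have : eps * (v - s) <= eps * (u - s) by rewrite ler_pM2l //; lra.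
    rewrite /g in h1; lra.
  have ueq : u = t.
    apply/eqP; rewrite eq_le ut /=; rewrite leNgt; apply/negP => hut.
    have [d d0 hd] := dW u ltac:(by rewrite su hut) eps eps0.
    pose h := Num.min (d / 2) (t - u).
    have h0 : 0 < h by rewrite lt_min; apply/andP; split; lra.
    have hd2 : h < d.
      rewrite gt_min; apply/orP; left; lra.
    have htu : h <= t - u by rewrite ge_min lexx orbT.
    have Auh : A (u + h).
      split; first by apply/andP; split; lra.
      have := hd h ltac:(by rewrite h0 hd2).
      have e1 : eps * (u + h - s) = eps * (u - s) + eps * h by ring.
      rewrite e1; lra.
    have := sup_upper_bound hA Auh; rewrite -/u; lra.
  by rewrite -ueq.
have [->|st'] := eqVneq s t; first by [].
have ts0 : 0 < t - s by rewrite subr_gt0 lt_neqAle st' st.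
rewrite leNgt; apply/negP => hlt.
have := key ((W t - W s) / 2 / (t - s)) ltac:(apply: divr_gt0 => //; lra).
rewrite mulfVK; last by rewrite gt_eqF.
lra.
Qed.

Lemma last_zero (g : R -> R) p r : continuous g -> p < r -> g p <= 0 ->
  0 < g r -> exists a, [/\ p <= a, a < r, g a = 0 &
     forall s, a <= s <= r -> 0 <= g s].
Proof.
move=> cg pr gp gr.
pose A := [set s | p <= s <= r /\ g s <= 0].
have Ap : A p by split; [rewrite lexx ltW | ].
have ubr : ubound A r by move=> x [/andP[_ ->]].
have hA : has_sup A by split; [exists p | exists r].
set a := sup A.
have pa : p <= a by apply: (sup_upper_bound hA).
have ar : a <= r by apply: ge_sup => //; exists p.
have pos : forall s, a < s <= r -> 0 < g s.
  move=> s /andP[hs sr]; rewrite ltNge; apply/negP => gs.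
  have : A s by split => //; apply/andP; split; lra.
  move/(sup_upper_bound hA); rewrite -/a; lra.
have ga_le : g a <= 0.
  rewrite leNgt; apply/negP => ga.
  have [d d0 hd] := cont_ed (cg a) ga.
  have [v [/andP[pv vr] gv] hv] := sup_adherent d0 hA.
  rewrite -/a in hv.
  have va : v <= a by apply: (sup_upper_bound hA); split => //; apply/andP.
  have := hd v ltac:(rewrite ler0_norm; lra).
  rewrite ltr_norml => /andP[h1 _]; lra.
have ar' : a < r by rewrite lt_neqAle ar andbT; apply/negP => /eqP e; rewrite e in ga_le; lra.
have ga_ge : 0 <= g a.
  rewrite leNgt; apply/negP => ga.
  have [d d0 hd] := cont_ed (cg a) (ltac:(lra) : 0 < - g a).
  pose s := a + Num.min (d / 2) (r - a).
  have m0 : 0 < Num.min (d / 2) (r - a) by rewrite lt_min; apply/andP; split; lra.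
  have md : Num.min (d / 2) (r - a) < d.
    rewrite gt_min; apply/orP; left; lra.
  have mr : Num.min (d / 2) (r - a) <= r - a by rewrite ge_min lexx orbT.
  have := pos s ltac:(apply/andP; split; rewrite /s; lra).
  have := hd s ltac:(rewrite /s addrAC subrr add0r ger0_norm; lra).
  rewrite ltr_norml => /andP[_ h2]; lra.
exists a; split => //; first lra.
move=> s /andP[hs sr]; have [<-|ne] := eqVneq a s; first lra.
by apply/ltW/pos; rewrite sr andbT lt_neqAle ne.
Qed.

Lemma convex_lip H p : convex_fun H -> {for p, continuous H} ->
  exists2 d, 0 < d & exists2 K, 0 <= K &
    forall u v, `|u - p| < d -> `|v - u| <= 1 -> H v - H u <= K * `|v - u|.
Proof.
move=> cv cp.
have [d0 d00 hd0] := cont_ed cp ltr01.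
exists (Num.min d0 1); first by rewrite lt_min d00 ltr01.
set K := Num.max 0 (Num.max (H (p + 2) - H p + 1) (H (p - 2) - H p + 1)).
have K0 : 0 <= K by rewrite le_max lexx.
have K1 : H (p + 2) - H p + 1 <= K by rewrite le_max le_max lexx orbT.
have K2 : H (p - 2) - H p + 1 <= K by rewrite le_max le_max lexx !orbT.
exists K => // u v.
rewrite lt_min => /andP[hu1 hu2] hvu.
have Hu : H p - 1 < H u.
  have := hd0 u hu1; rewrite ltr_norml => /andP[h1 _]; lra.
have hu : -1 < u - p < 1 by rewrite -ltr_norml.
case/andP: hu => hu3 hu4.
have [->|neq] := eqVneq v u; first by rewrite !subrr normr0 mulr0.
have [vu|uv] := ltP u v.
  rewrite ger0_norm in hvu *; try lra.
  set b := p + 2.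
  have bu : 1 < b - u by rewrite /b; lra.
  set t := (v - u) / (b - u).
  have t0 : 0 <= t by apply: divr_ge0; lra.
  have t1 : t <= v - u by rewrite /t ler_pdivrMr; nra.
  have t1' : t <= 1 by lra.
  have := cv b u t ltac:(by rewrite t0 t1').
  have -> : t * b + (1 - t) * u = v by rewrite /t; field; lra.
  move=> hc.
  have : t * (H b - H u) <= t * K by rewrite ler_wpM2l //; lra.
  have : t * K <= (v - u) * K by rewrite ler_wpM2r.
  lra.
have vu' : v < u by rewrite lt_neqAle neq uv.
rewrite ler0_norm in hvu *; try lra.
set b := p - 2.
have bu : 1 < u - b by rewrite /b; lra.
set t := (u - v) / (u - b).
have t0 : 0 <= t by apply: divr_ge0; lra.
have t1 : t <= u - v by rewrite /t ler_pdivrMr; nra.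
have t1' : t <= 1 by lra.
have := cv b u t ltac:(by rewrite t0 t1').
have -> : t * b + (1 - t) * u = v by rewrite /t; field; lra.
move=> hc.
have : t * (H b - H u) <= t * K by rewrite ler_wpM2l //; lra.
have : t * K <= (u - v) * K by rewrite ler_wpM2r.
lra.
Qed.

End P0b.

Section P0c.
Variable R : realType.

Lemma near_right_ex (P : R -> Prop) : (\forall h \near 0^'+, P h) ->
  exists2 d : R, 0 < d & forall h, 0 < h < d -> P h.
Proof.
rewrite /at_right near_withinE => /nbhs_ballP [d d0 hd].
exists d => // h /andP[h0 hd'].
apply: hd => //; rewrite /ball /= sub0r normrN gtr0_norm //.
Qed.

Lemma deriv_near (f : R -> R) t D : derivable f t 1 -> f^`() t = D ->
  forall e, 0 < e -> \forall h \near 0^'+, `|f (t + h) - f t - h * D| <= e * h.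
Proof.
move=> df fd e e0.
have hc : (fun h : R => h^-1 *: (f (h *: 1 + t) - f t)) @ 0^' --> 'D_1 f t.
  exact: df.
rewrite -derive1E fd in hc.
move/cvgrPdist_le : hc => /(_ e e0); rewrite near_withinE => hn.
rewrite /at_right near_withinE; apply: filterS hn => h hP h0.
have hh := hP (lt0r_neq0 h0).
rewrite [h%:A]mulr1 [h + t]addrC in hh.
have e1 : f (t + h) - f t - h * D = - h * (D - h^-1 *: (f (t + h) - f t)).
  rewrite /GRing.scale /=; field; rewrite gt_eqF //.
rewrite e1 normrM normrN.
by rewrite (gtr0_norm h0) mulrC ler_pM2r.
Qed.
End P0c.

Section P1.
Variable R : realType.

Lemma lap_mul n (E : rel 'I_n) (w : 'I_n -> 'I_n -> R) (x : 'I_n -> R) i :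
  \sum_j laplacian E w i j * x j =
  \sum_(k | E i k && (k != i)) w i k * (x i - x k).
Proof.
rewrite (bigD1 i) //= !mxE eqxx.
rewrite [X in _ + X](eq_bigr (fun j => if E i j then - (w i j * x j) else 0)); last first.
  move=> j ji.
  rewrite ?mxE eq_sym (negbTE ji).
  by case: (E i j); rewrite ?mulNr ?mul0r.
rewrite -big_mkcondr /= sumrN.
rewrite [X in _ - X](eq_bigl (fun k => E i k && (k != i))); last by move=> k; rewrite andbC.
under [RHS]eq_bigr do rewrite mulrBr.
by rewrite sumrB big_distrl /=.
Qed.

Lemma lap_row0 n (E : rel 'I_n) (w : 'I_n -> 'I_n -> R) i :
  \sum_j laplacian E w i j = 0.
Proof.
have := lap_mul E w (fun _ => 1) i.
under eq_bigr do rewrite mulr1.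
move=> ->; rewrite big1 // => k _; by rewrite subrr mulr0.
Qed.

Lemma perron_col n (L : 'M[R]_n) (q : 'I_n -> R) : left_perron L q ->
  forall j, \sum_i q i * L i j = 0.
Proof.
move=> [hq _] j.
have := congr1 (fun A : 'M[R]_(1, n) => A 0 j) hq.
rewrite /= !mxE.
move=> h; rewrite -[RHS]h.
by apply: eq_bigr => i _; rewrite mxE.
Qed.

Lemma perron_sum n (L : 'M[R]_n) (q : 'I_n -> R) (z : 'I_n -> R) :
  left_perron L q -> \sum_i q i * \sum_j L i j * z j = 0.
Proof.
move=> hp.
under eq_bigr do rewrite big_distrr /=.
rewrite exchange_big /=.
rewrite big1 // => j _.
under eq_bigr do rewrite mulrA.
by rewrite -big_distrl /= perron_col // mul0r.
Qed.

Lemma lap_kernel n (L : 'M[R]_n) (x : 'I_n -> R) : (0 < n)%N ->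
  \rank L = n.-1 -> (forall i, \sum_j L i j = 0) ->
  (forall i, \sum_j L i j * x j = 0) -> consensus x.
Proof.
move=> n0 rk r0 hx.
pose u : 'rV[R]_n := \row_i x i.
pose o : 'rV[R]_n := \row_i 1.
have ku : (u <= kermx L^T)%MS.
  apply/sub_kermxP; apply/rowP => i; rewrite !mxE.
  rewrite -[RHS](hx i); apply: eq_bigr => j _; rewrite !mxE mulrC //.
have ko : (o <= kermx L^T)%MS.
  apply/sub_kermxP; apply/rowP => i; rewrite !mxE.
  rewrite -[RHS](r0 i); apply: eq_bigr => j _; rewrite !mxE mul1r //.
have rk1 : \rank (kermx L^T) = 1%N.
  rewrite mxrank_ker mxrank_tr rk.
  by case: n n0 {L rk r0 hx u o ku ko x} => // n _ /=; rewrite subSnn.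
have o0 : o != 0.
  apply/eqP => /rowP /(_ (Ordinal n0)); rewrite !mxE => /eqP; by rewrite oner_eq0.
have ro : \rank o = 1%N by rewrite rank_rV o0.
have := (mxrank_leqif_sup ko).2; rewrite ro rk1 eqxx => /esym ko'.
have : (u <= o)%MS by apply: submx_trans ku ko'.
move=> /sub_rVP [a ha]; exists a => i.
have := congr1 (fun A : 'rV[R]_n => A 0 i) ha; rewrite /= !mxE mulr1 //.
Qed.

End P1.

Section P2.
Variable R : realType.
Variables (n : nat) (E : rel 'I_n) (w : 'I_n -> 'I_n -> R) (q : 'I_n -> R)
  (H : R -> R) (c : R).
Hypothesis wpos : forall i j, E i j -> 0 < w i j.
Hypothesis hp : left_perron (laplacian E w) q.
Hypothesis c0 : 0 < c.
Hypothesis Hcv : convex_fun H.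

Lemma wnb0 i k : E i k && (k != i) -> 0 <= w i k.
Proof. by case/andP => /wpos /ltW. Qed.

Definition sigw i := \sum_(k | E i k && (k != i)) w i k.

Lemma sigw_ge0 i : 0 <= sigw i.
Proof. by apply: sumr_ge0 => k; exact: wnb0. Qed.

Lemma row_ineq (z : 'I_n -> R) i h : 0 <= h -> h * sigw i <= 1/2 ->
  H (z i - h * \sum_(k | E i k && (k != i)) w i k * (z i - z k)) <=
  H (z i) - h * \sum_(k | E i k && (k != i)) w i k * (H (z i) - H (z k))
  - h * (2 * \sum_(k | E i k && (k != i)) w i k * Gap H (z i) (z k)).
Proof.
move=> h0 hs.
have [s0|sn0] := eqVneq (sigw i) 0.
  have z1 := @psum_zero R 'I_n (index_enum 'I_n) _ _ (fun k => z i - z k) (@wnb0 i) s0.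
  have z2 := @psum_zero R 'I_n (index_enum 'I_n) _ _ (fun k => H (z i) - H (z k)) (@wnb0 i) s0.
  have z3 := @psum_zero R 'I_n (index_enum 'I_n) _ _ (fun k => Gap H (z i) (z k)) (@wnb0 i) s0.
  rewrite z1 z2 z3 !mulr0 !subr0; exact: lexx.
have sp : 0 < sigw i by rewrite lt0r sn0 sigw_ge0.
set lam := h * sigw i.
have lam0 : 0 <= lam by apply: mulr_ge0 => //; apply: sigw_ge0.
pose p k := w i k / sigw i.
pose m k := (1 - lam) * z i + lam * z k.
have p0 : forall k, E i k && (k != i) -> 0 <= p k.
  by move=> k hk; rewrite /p divr_ge0 ?wnb0 // ltW.
have p1 : \sum_(k | E i k && (k != i)) p k = 1.
  by rewrite /p -big_distrl /= -/(sigw i) divff.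
have eqL : \sum_(k | E i k && (k != i)) p k * m k =
    z i - h * \sum_(k | E i k && (k != i)) w i k * (z i - z k).
  rewrite (eq_bigr (fun k => p k * z i - h * (w i k * (z i - z k)))); last first.
    by move=> k _; rewrite /p /m /lam; field.
  by rewrite sumrB -big_distrl /= p1 mul1r -big_distrr.
rewrite -eqL.
apply: le_trans (@jensen R H 'I_n (index_enum 'I_n) _ p m Hcv p0 p1) _.
apply: (@le_trans _ _ (\sum_(k | E i k && (k != i))
   p k * ((1 - lam) * H (z i) + lam * H (z k) - 2 * lam * Gap H (z i) (z k)))).
  apply: ler_sum => k hk; rewrite ler_wpM2l ?p0 //.
  by apply: two_point.
rewrite (eq_bigr (fun k => p k * H (z i) - h * (w i k * (H (z i) - H (z k)))
   - h * (2 * (w i k * Gap H (z i) (z k))))); last first.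
  by move=> k _; rewrite /p /lam; field.
rewrite sumrB sumrB -big_distrl /= p1 mul1r -big_distrr -big_distrr /=.
by rewrite -big_distrr /=.
Qed.

Definition kap (z : 'I_n -> R) :=
  \sum_i q i * (2 * \sum_(k | E i k && (k != i)) w i k * Gap H (z i) (z k)).

Lemma kap_ge0 z : 0 <= kap z.
Proof.
apply: sumr_ge0 => i _; apply: mulr_ge0; first by case: hp => _ [/(_ i) /ltW].
apply: mulr_ge0 => //; apply: sumr_ge0 => k hk; apply: mulr_ge0; first exact: wnb0.
exact: Gap_ge0.
Qed.

Lemma kap_gt0 z : strictly_convex H ->
  (exists i k, E i k && (k != i) /\ z i != z k) -> 0 < kap z.
Proof.
move=> sc [i0 [k0 [hk zk]]].
rewrite /kap (bigD1 i0) //=.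
have rest : 0 <= \sum_(i | i != i0)
    q i * (2 * \sum_(k | E i k && (k != i)) w i k * Gap H (z i) (z k)).
  apply: sumr_ge0 => i _; apply: mulr_ge0; first by case: hp => _ [/(_ i) /ltW].
  apply: mulr_ge0 => //; apply: sumr_ge0 => k hk'; apply: mulr_ge0; first exact: wnb0.
  exact: Gap_ge0.
have t0 : 0 < q i0 * (2 * \sum_(k | E i0 k && (k != i0)) w i0 k * Gap H (z i0) (z k)).
  apply: mulr_gt0; first by case: hp => _ [/(_ i0)].
  apply: mulr_gt0 => //.
  rewrite (bigD1 k0) //=.
  have r2 : 0 <= \sum_(k | (E i0 k && (k != i0)) && (k != k0)) w i0 k * Gap H (z i0) (z k).
    apply: sumr_ge0 => k /andP[hk' _]; apply: mulr_ge0; first exact: wnb0.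
    exact: Gap_ge0.
  have t1 : 0 < w i0 k0 * Gap H (z i0) (z k0).
    by apply: mulr_gt0; [case/andP: hk => /wpos | exact: Gap_gt0].
  lra.
lra.
Qed.

Lemma step_ineq (z : 'I_n -> R) h : 0 <= h -> (forall i, h * sigw i <= 1/2) ->
  \sum_i q i * H (z i - h * \sum_(k | E i k && (k != i)) w i k * (z i - z k))
  <= \sum_i q i * H (z i) - h * kap z.
Proof.
move=> h0 hs.
apply: (@le_trans _ _ (\sum_i q i * (H (z i)
   - h * \sum_(k | E i k && (k != i)) w i k * (H (z i) - H (z k))
   - h * (2 * \sum_(k | E i k && (k != i)) w i k * Gap H (z i) (z k))))).
  apply: ler_sum => i _; apply: ler_wpM2l; last exact: row_ineq.
  by case: hp => _ [/(_ i) /ltW].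
have hz : \sum_i q i * \sum_(k | E i k && (k != i)) w i k * (H (z i) - H (z k)) = 0.
  rewrite -[RHS](perron_sum (fun j => H (z j)) hp).
  by apply: eq_bigr => i _; rewrite lap_mul.
under eq_bigr do rewrite !mulrBr.
rewrite !sumrB.
have e1 : \sum_i q i * (h * \sum_(k | E i k && (k != i)) w i k * (H (z i) - H (z k))) = h * \sum_i q i * \sum_(k | E i k && (k != i)) w i k * (H (z i) - H (z k)).
  rewrite big_distrr; apply: eq_bigr => i _; by rewrite mulrCA.
have e2 : \sum_i q i * (h * (2 * \sum_(k | E i k && (k != i)) w i k * Gap H (z i) (z k)))
   = h * kap z.
  rewrite /kap big_distrr; apply: eq_bigr => i _; by rewrite mulrCA.
by rewrite e1 hz mulr0 e2 subr0.
Qed.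

End P2.

Section P2b.
Variable R : realType.

Lemma within_ed (f : R -> R) : {within [set t : R | 0 <= t], continuous f} ->
  forall u, 0 <= u -> forall e, 0 < e -> exists2 d, 0 < d &
    forall v, 0 <= v -> `|v - u| < d -> `|f v - f u| < e.
Proof.
move=> cf u u0 e e0.
have := (subspace_continuousP _ f).1 cf u u0.
move/cvgrPdist_lt => /(_ e e0); rewrite near_withinE => /nbhs_ballP [d d0 hd].
exists d => // v v0 hv; rewrite distrC; apply: hd => //.
by rewrite /ball /= distrC.
Qed.

Variables (n : nat) (E : rel 'I_n) (w : 'I_n -> 'I_n -> R) (q : 'I_n -> R)
  (H : R -> R) (c : R).
Hypothesis wpos : forall i j, E i j -> 0 < w i j.
Hypothesis hp : left_perron (laplacian E w) q.
Hypothesis c0 : 0 < c.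
Hypothesis Hcv : convex_fun H.
Hypothesis Hcont : continuous H.

Definition Wf (x : R -> 'I_n -> R) t := \sum_i q i * H (c * x t i).

Lemma Wf_cont x : is_trajectory (laplacian E w) x ->
  {within [set t : R | 0 <= t], continuous (Wf x)}.
Proof.
move=> [tc _]; apply/subspace_continuousP => u u0.
rewrite /Wf.
apply: (@cvg_big _ _ +%R 0 xpredT add_continuous) => i _.
apply: cvgMl_tmp.
have hx := (subspace_continuousP _ _).1 (tc i) u u0.
have hc : {for x u i, continuous (fun y => H (c * y))}.
  apply: continuous_comp; last exact: Hcont.
  by apply: cvgMl_tmp; exact: cvg_id.
exact: (continuous_cvg _ hc hx).
Qed.

Lemma local_dec x tau e : is_trajectory (laplacian E w) x -> 0 < tau -> 0 < e ->
  \forall h \near 0^'+, Wf x (tau + h) <=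
     Wf x tau - h * kap E w q H (fun i => c * x tau i) + e * h.
Proof.
move=> tr tau0 e0.
set z := fun i => c * x tau i.
pose u h i := z i - h * \sum_(k | E i k && (k != i)) w i k * (z i - z k).
have key : forall i, \forall h \near 0^'+, H (c * x (tau + h) i) - H (u h i) <= e * h.
  move=> i.
  have [d d0 [K K0 hK]] := convex_lip Hcv (@Hcont (z i)).
  set S := \sum_(k | E i k && (k != i)) w i k * (z i - z k).
  have [der dval] := tr.2 i tau tau0.
  set D := - \sum_j laplacian E w i j * x tau j.
  pose e' := e / ((K + 1) * c).
  have e'0 : 0 < e' by rewrite /e' divr_gt0 // mulr_gt0 //; lra.
  have hder := deriv_near der dval e'0.
  have uD : forall h, u h i = c * (x tau i + h * D).
    move=> h; rewrite /u /D lap_mul /S /z.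
    have hs : \sum_(k | E i k && (k != i)) w i k * (c * x tau i - c * x tau k) =
      c * \sum_(k | E i k && (k != i)) w i k * (x tau i - x tau k).
      by rewrite big_distrr; apply: eq_bigr => k _ /=; ring.
    rewrite hs; ring.
  near=> h.
  have h0 : 0 < h by near: h; exact: nbhs_right_gt.
  have hd : h < d / (`|S| + 1) by near: h; apply: nbhs_right_lt; rewrite divr_gt0 //; lra.
  have h1 : h < 1 / (c * e') by near: h; apply: nbhs_right_lt; rewrite divr_gt0 // mulr_gt0.
  have dd : `|x (tau + h) i - x tau i - h * D| <= e' * h by near: h; exact: hder.
  have hu : `|u h i - z i| < d.
    rewrite /u addrAC subrr add0r normrN normrM (gtr0_norm h0) -/S.
    have : h * (`|S| + 1) < d by rewrite -ltr_pdivlMr //; lra.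
    have : 0 <= `|S| by [].
    nra.
  have hvu : c * x (tau + h) i - u h i = c * (x (tau + h) i - x tau i - h * D).
    rewrite uD; ring.
  have hvu1 : `|c * x (tau + h) i - u h i| <= c * (e' * h).
    by rewrite hvu normrM (gtr0_norm c0) ler_pM2l.
  have ce'0 : 0 < c * e' by rewrite mulr_gt0.
  have hvu2 : `|c * x (tau + h) i - u h i| <= 1.
    apply: le_trans hvu1 _; rewrite mulrA.
    have : h * (c * e') < 1 by rewrite -ltr_pdivlMr // mulrC.
    lra.
  apply: le_trans (hK _ _ hu hvu2) _.
  apply: (@le_trans _ _ (K * (c * (e' * h)))).
    by apply: ler_wpM2l.
  have -> : K * (c * (e' * h)) = (K / (K + 1)) * e * h.
    rewrite /e'; field.
    by rewrite gt_eqF ?(gt_eqF c0) //; lra.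
  have kk : K / (K + 1) <= 1 by rewrite ler_pdivrMr; lra.
  have : 0 < e * h by rewrite mulr_gt0.
  have : 0 <= K / (K + 1) by rewrite divr_ge0 //; lra.
  nra.
have allk := filter_forall _ key.
have sg : forall i, \forall h \near 0^'+, h * sigw E w i <= 1/2.
  move=> i; near=> h.
  have h0 : 0 < h by near: h; exact: nbhs_right_gt.
  have hs : h < 1 / (2 * (sigw E w i + 1)).
    near: h; apply: nbhs_right_lt; rewrite divr_gt0 // mulr_gt0 //.
    have := sigw_ge0 wpos i; lra.
  have s0 := sigw_ge0 wpos i.
  have : h * (2 * (sigw E w i + 1)) < 1.
    by rewrite -ltr_pdivlMr // mulr_gt0 //; lra.
  nra.
have allsg := filter_forall _ sg.
near=> h.
have h0 : 0 < h by near: h; exact: nbhs_right_gt.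
have hk : forall i, H (c * x (tau + h) i) - H (u h i) <= e * h.
  by near: h; exact: allk.
have hs : forall i, h * sigw E w i <= 1/2 by near: h; exact: allsg.
have st := step_ineq wpos hp Hcv z (ltW h0) hs.
rewrite /Wf.
apply: (@le_trans _ _ (\sum_i q i * (H (u h i) + e * h))).
  apply: ler_sum => i _; apply: ler_wpM2l; first by case: hp => _ [/(_ i) /ltW].
  by have := hk i; lra.
under eq_bigr do rewrite mulrDr.
rewrite big_split /= -big_distrl /=.
have -> : \sum_i q i = 1 by case: hp => _ [].
rewrite mul1r lerD2r.
exact: st.
Unshelve. all: by end_near.
Qed.

Lemma conv_lyap (n0 : (0 < n)%N) (rk : \rank (laplacian E w) = n.-1)
  (sc : strictly_convex H) (beta : R) (b0 : 0 < beta) :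
  strict_lyapunov (laplacian E w) (fun v => beta * \sum_(i < n) q i * H (c * v i)).
Proof.
move=> x tr nc t t0.
suff : Wf x t < Wf x 0 by rewrite /Wf => h; rewrite ltr_pM2l.
have Wc := within_ed (Wf_cont tr).
have mono : forall s u, 0 < s -> s <= u -> Wf x u <= Wf x s.
  move=> s u s0 su; apply: dini_mono su _ _.
    move=> v /andP[sv vu] e e0.
    have [d d0 hd] := Wc v ltac:(lra) e e0.
    exists d => // y /andP[sy _]; apply: hd; lra.
  move=> v /andP[sv vu] e e0.
  have v0 : 0 < v by lra.
  have /near_right_ex [d d0 hd] := local_dec tr v0 e0.
  exists d => // h hh; have := hd h hh.
  have := kap_ge0 wpos hp Hcv (fun i => c * x v i).
  case/andP: hh => h0 _.
  have : 0 <= h * kap E w q H (fun i => c * x v i).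
    by apply: mulr_ge0; [lra | exact: kap_ge0].
  lra.
have le0 : forall tau, 0 < tau -> Wf x tau <= Wf x 0.
  move=> tau tau0; rewrite leNgt; apply/negP => hlt.
  have [d d0 hd] := Wc 0 (lexx 0) (Wf x tau - Wf x 0) ltac:(lra).
  pose s := Num.min (d / 2) tau.
  have s0 : 0 < s by rewrite lt_min; apply/andP; split; lra.
  have st : s <= tau by rewrite ge_min lexx orbT.
  have sd : s <= d / 2 by rewrite ge_min lexx.
  have := hd s (ltW s0) ltac:(rewrite subr0 gtr0_norm //; lra).
  rewrite ltr_norml => /andP[_ h2].
  have := mono s tau s0 st; lra.
have [i0 _] : exists i0 : 'I_n, true by exists (Ordinal n0).
have [tau [/andP[tau0 taut] nct]] : exists tau, 0 < tau < t /\ ~ consensus (x tau).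
  apply: contrapT => hn; apply: nc; exists (x 0 i0) => i.
  apply/eqP; rewrite -subr_eq0 -normr_le0 leNgt; apply/negP => hpos.
  set N := `|x 0 i - x 0 i0| in hpos *.
  have [d1 d10 hd1] := within_ed (tr.1 i) (lexx 0) (ltac:(lra) : 0 < N / 2).
  have [d2 d20 hd2] := within_ed (tr.1 i0) (lexx 0) (ltac:(lra) : 0 < N / 2).
  pose s := Num.min (Num.min d1 d2) t / 2.
  have m0 : 0 < Num.min (Num.min d1 d2) t by rewrite !lt_min d10 d20 t0.
  have m1 : Num.min (Num.min d1 d2) t <= d1 by rewrite !ge_min lexx.
  have m2 : Num.min (Num.min d1 d2) t <= d2 by rewrite !ge_min lexx orbT.
  have m3 : Num.min (Num.min d1 d2) t <= t by rewrite ge_min lexx orbT.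
  have s0 : 0 < s by rewrite /s; lra.
  have cs : consensus (x s).
    apply: contrapT => hc; apply: hn; exists s; split => //.
    apply/andP; split; rewrite /s; lra.
  case: cs => a ha.
  have := hd1 s (ltW s0) ltac:(rewrite subr0 gtr0_norm //; rewrite /s; lra).
  have := hd2 s (ltW s0) ltac:(rewrite subr0 gtr0_norm //; rewrite /s; lra).
  rewrite !ha => h2 h1.
  have hD : x 0 i - x 0 i0 = - (a - x 0 i) + (a - x 0 i0) by ring.
  have := ler_normD (- (a - x 0 i)) (a - x 0 i0).
  rewrite -hD normrN -/N; lra.
have edge : exists i k, E i k && (k != i) /\ c * x tau i != c * x tau k.
  apply: contrapT => hn; apply: nct.
  apply: (lap_kernel n0 rk (lap_row0 E w)) => i.
  rewrite lap_mul big1 // => k hk.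
  case: (eqVneq (c * x tau i) (c * x tau k)) => [he|hne]; last first.
    by exfalso; apply: hn; exists i, k; split.
  have : x tau i = x tau k by apply: (mulfI (lt0r_neq0 c0)).
  by move=> ->; rewrite subrr mulr0.
have kp := kap_gt0 wpos hp Hcv sc edge.
have /near_right_ex [d d0 hd] := local_dec tr tau0 (ltac:(lra) : 0 < kap E w q H (fun i => c * x tau i) / 2).
pose h := Num.min d (t - tau) / 2.
have m0 : 0 < Num.min d (t - tau) by rewrite lt_min d0 /=; lra.
have m1 : Num.min d (t - tau) <= d by rewrite ge_min lexx.
have m2 : Num.min d (t - tau) <= t - tau by rewrite ge_min lexx orbT.
have h0 : 0 < h by rewrite /h; lra.
have := hd h ltac:(apply/andP; split; rewrite /h; lra).
have := mono (tau + h) t ltac:(lra) ltac:(rewrite /h; lra).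
have := le0 tau tau0.
have : 0 < h * kap E w q H (fun i => c * x tau i) by apply: mulr_gt0.
lra.
Qed.

End P2b.

Section P3.
Variable R : realType.

Definition expbd (B D : R) (f : nat -> R) :=
  forall k, `|f k| <= B * (D ^+ k / k`!%:R).

Lemma expbd_B0 B D f : expbd B D f -> 0 <= B.
Proof.
move=> h; have := h 0%N; rewrite expr0 fact0 divr1 mulr1.
by apply: le_trans.
Qed.

Lemma expbd_cvg B D f : 0 <= D -> expbd B D f -> forall t, cvgn (pseries f t).
Proof.
move=> D0 hb t.
have B0 := expbd_B0 hb.
apply: normed_cvg.
apply: (@series_le_cvg R _ (B *: exp_coeff (D * `|t|))).
- by move=> k /=.
- move=> k /=; rewrite /exp_coeff /=; apply: mulr_ge0 => //.
  by apply: divr_ge0; [apply: exprn_ge0; apply: mulr_ge0 | ].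
- move=> k /=; rewrite /exp_coeff /= normrM normrX.
  have -> : (B *: (fun n : nat => (D * `|t|) ^+ n / n`!%:R)) k =
     B * (D ^+ k / k`!%:R) * `|t| ^+ k.
    transitivity (B * ((D * `|t|) ^+ k / k`!%:R)); first by [].
    by rewrite exprMn; ring.
  by apply: ler_wpM2r; [apply: exprn_ge0 | apply: hb].
- by apply: is_cvg_seriesZ; exact: is_cvg_series_exp_coeff.
Qed.

Lemma expbd_diffs B D f : 0 <= D -> expbd B D f -> expbd (B * D) D (pseries_diffs f).
Proof.
move=> D0 hb k; rewrite /pseries_diffs normrM ger0_norm // .
apply: (@le_trans _ _ (k.+1%:R * (B * (D ^+ k.+1 / k.+1`!%:R)))).
  by apply: ler_wpM2l.
rewrite factS natrM exprS.
have k0 : (k.+1%:R : R) != 0 by rewrite pnatr_eq0.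
have f0 : (k`!%:R : R) != 0 by rewrite pnatr_eq0 -lt0n fact_gt0.
rewrite le_eqVlt; apply/orP; left; apply/eqP; field.
have k1 : (1 + k%:R : R) != 0 by rewrite addrC natr1 pnatr_eq0.
by rewrite f0 k1.
Qed.

Lemma expbd_derive B D f : 0 <= D -> expbd B D f -> forall t : R,
  is_derive t 1 (fun s => limn (pseries f s)) (limn (pseries (pseries_diffs f) t)).
Proof.
move=> D0 hb t.
have h1 := expbd_diffs D0 hb.
have h2 := expbd_diffs D0 h1.
apply: (@pseries_snd_diffs R f (`|t| + 1)).
- exact: expbd_cvg D0 hb _.
- exact: expbd_cvg D0 h1 _.
- exact: expbd_cvg D0 h2 _.
- have ht := normr_ge0 t; rewrite (ger0_norm (_ : 0 <= `|t| + 1)); lra.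
Qed.

Lemma pseries_sum n (F : 'I_n -> nat -> R) (a : 'I_n -> R) t :
  (forall j, cvgn (pseries (F j) t)) ->
  pseries (fun k => \sum_j a j * F j k) t @ \oo -->
     \sum_j a j * limn (pseries (F j) t).
Proof.
move=> hF.
have -> : pseries (fun k => \sum_j a j * F j k) t =
    (fun N => \sum_j a j * pseries (F j) t N).
  apply/funext => N; rewrite /pseries /series /=.
  under eq_bigr do rewrite big_distrl /=.
  rewrite exchange_big /=; apply: eq_bigr => j _.
  by rewrite big_distrr /=; apply: eq_bigr => k _; rewrite mulrA.
apply: (@cvg_big _ _ +%R 0 xpredT add_continuous) => j _.
apply: cvgMl_tmp; exact: hF.
Qed.

End P3.

Section P3b.
Variable R : realType.

Lemma pseries_at0 (f : nat -> R) : limn (pseries f 0) = f 0%N.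
Proof.
apply: lim_near_cst => //.
near=> m.
have m0 : (0 < m)%N by near: m; exists 1%N.
rewrite /pseries /series /= -(prednK m0) big_nat_recl // expr0 mulr1 big1 ?addr0 //.
by move=> k _; rewrite expr0n /= mulr0.
Unshelve. all: by end_near.
Qed.

Lemma pseries_exp (a t : R) : limn (pseries (fun k => a ^+ k / k`!%:R) t) = expR (a * t).
Proof.
rewrite /expR /pseries; congr (limn _); apply/funext => N; rewrite /series /=.
apply: eq_bigr => k _; rewrite /exp_coeff /= exprMn; ring.
Qed.

Lemma expbd_exp (a : R) : expbd 1 `|a| (fun k => a ^+ k / k`!%:R).
Proof.
move=> k; by rewrite mul1r normrM normrX normfV normr_nat.
Qed.

Lemma pseries_scale (a : R) (f : nat -> R) t : cvgn (pseries f t) ->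
  limn (pseries (fun k => a * f k) t) = a * limn (pseries f t).
Proof.
move=> hc; apply: cvg_lim => //.
have -> : pseries (fun k => a * f k) t = (fun N => a * pseries f t N).
  apply/funext => N; rewrite /pseries /series /= big_distrr /=.
  by apply: eq_bigr => k _; rewrite mulrA.
exact: cvgMl_tmp.
Qed.

Variables (n : nat) (E : rel 'I_n) (w : 'I_n -> 'I_n -> R) (q : 'I_n -> R).
Hypothesis wpos : forall i j, E i j -> 0 < w i j.
Hypothesis hp : left_perron (laplacian E w) q.

Local Notation L := (laplacian E w).

Lemma diag_L i : L i i = sigw E w i.
Proof. by rewrite mxE eqxx. Qed.

Definition dd := 1 + \sum_i sigw E w i.

Lemma sig_lt_dd i : sigw E w i < dd.
Proof.
rewrite /dd (bigD1 i) //=.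
have : 0 <= \sum_(j | j != i) sigw E w j by apply: sumr_ge0 => j _; exact: sigw_ge0 wpos j.
lra.
Qed.

Lemma dd_gt0 : 0 < dd.
Proof.
rewrite /dd; have : 0 <= \sum_i sigw E w i by apply: sumr_ge0 => j _; exact: sigw_ge0 wpos j.
lra.
Qed.

Definition A i j := (i == j)%:R - L i j / dd.

Lemma A_ge0 i j : 0 <= A i j.
Proof.
have d0 := dd_gt0.
rewrite /A; have [->|ij] := eqVneq i j.
  rewrite diag_L subr_ge0 ler_pdivrMr // mul1r; exact/ltW/sig_lt_dd.
rewrite mxE (negbTE ij) sub0r; case hE: (E i j) => //=.
  by rewrite mulNr opprK divr_ge0 //; [apply: ltW; exact: wpos hE | apply: ltW].
by rewrite mul0r oppr0.
Qed.

Lemma sum_delta (F : 'I_n -> R) i : \sum_j (i == j)%:R * F j = F i.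
Proof.
rewrite (bigD1 i) //= eqxx mul1r big1 ?addr0 // => j ji.
by rewrite eq_sym (negbTE ji) mul0r.
Qed.

Lemma sum_delta' (F : 'I_n -> R) j : \sum_i F i * (i == j)%:R = F j.
Proof.
rewrite (bigD1 j) //= eqxx mulr1 big1 ?addr0 // => i ij.
by rewrite (negbTE ij) mulr0.
Qed.

Lemma L_A i j : L i j = dd * (i == j)%:R - dd * A i j.
Proof. have := dd_gt0; rewrite /A => d0; field; exact: lt0r_neq0. Qed.

Lemma LmulA (z : 'I_n -> R) i :
  \sum_j L i j * z j = dd * z i - dd * \sum_j A i j * z j.
Proof.
under eq_bigr do rewrite L_A mulrBl -!mulrA.
rewrite sumrB -!big_distrr /=.
by rewrite (sum_delta z i).
Qed.

Lemma A_row i : \sum_j A i j = 1.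
Proof.
have d0 := dd_gt0.
rewrite /A sumrB.
have -> : \sum_j (i == j)%:R = 1 :> R.
  by have := sum_delta (fun _ => 1) i; under eq_bigr do rewrite mulr1.
by rewrite -big_distrl /= lap_row0 mul0r subr0.
Qed.

Lemma A_col j : \sum_i q i * A i j = q j.
Proof.
rewrite /A; under eq_bigr do rewrite mulrBr.
rewrite sumrB sum_delta'.
have -> : \sum_i q i * (L i j / dd) = (\sum_i q i * L i j) / dd.
  by rewrite big_distrl /=; apply: eq_bigr => i _; rewrite mulrA.
by rewrite perron_col // mul0r subr0.
Qed.

Fixpoint vs (x0 : 'I_n -> R) (k : nat) : 'I_n -> R :=
  match k with 0%N => x0 | k'.+1 => fun i => \sum_j A i j * vs x0 k' j end.

Lemma vs_bnd x0 (m M : R) : (forall j, m <= x0 j <= M) ->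
  forall k i, m <= vs x0 k i <= M.
Proof.
move=> hx; elim=> [|k IH] i //=.
apply/andP; split.
  apply: (@le_trans _ _ (\sum_j A i j * m)).
    by rewrite -big_distrl /= A_row mul1r.
  apply: ler_sum => j _; apply: ler_wpM2l; first exact: A_ge0.
  by case/andP: (IH j).
apply: (@le_trans _ _ (\sum_j A i j * M)).
  apply: ler_sum => j _; apply: ler_wpM2l; first exact: A_ge0.
  by case/andP: (IH j).
by rewrite -big_distrl /= A_row mul1r.
Qed.

Lemma vs_q x0 k : \sum_i q i * vs x0 k i = \sum_i q i * x0 i.
Proof.
elim: k => [|k IH] //=.
rewrite -IH.
under eq_bigr do rewrite big_distrr /=.
rewrite exchange_big /=; apply: eq_bigr => j _.
under eq_bigr do rewrite mulrA.
by rewrite -big_distrl /= A_col.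
Qed.

Definition cf x0 i k := dd ^+ k / k`!%:R * vs x0 k i.

Lemma cf_bd x0 (m M : R) : (forall j, m <= x0 j <= M) ->
  forall i, expbd (Num.max `|m| `|M|) dd (cf x0 i).
Proof.
move=> hx i k.
have d0 := dd_gt0.
rewrite /cf normrM ger0_norm; last by apply: divr_ge0; [apply: exprn_ge0; lra|].
rewrite mulrC; apply: ler_wpM2r; first by apply: divr_ge0; [apply: exprn_ge0; lra|].
have /andP[h1 h2] := vs_bnd hx k i.
rewrite le_max; apply/orP.
case: (lerP 0 (vs x0 k i)) => hv.
  by right; rewrite ger0_norm // (le_trans h2 (ler_norm M)).
left; rewrite ltr0_norm //.
have : - m <= `|m| by rewrite -normrN ler_norm.
lra.
Qed.

Lemma cf_diffs x0 i :
  pseries_diffs (cf x0 i) = fun k => \sum_j (dd * A i j) * cf x0 j k.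
Proof.
apply/funext => k; rewrite /pseries_diffs /cf /=.
rewrite big_distrr /= -big_distrr /=.
rewrite [X in _ = X](_ : _ = dd * (dd ^+ k / k`!%:R) * \sum_j A i j * vs x0 k j); last first.
  rewrite big_distrr /=; apply: eq_bigr => j _; ring.
rewrite factS natrM exprS.
have k0 : (k.+1%:R : R) != 0 by rewrite pnatr_eq0.
have f0 : (k`!%:R : R) != 0 by rewrite pnatr_eq0 -lt0n fact_gt0.
field; rewrite f0 /=.
by rewrite addrC natr1 pnatr_eq0.
Qed.

Definition Y x0 i t := limn (pseries (cf x0 i) t).
Definition gfun t := limn (pseries (fun k => (- dd) ^+ k / k`!%:R) t).
Definition xt x0 t i := gfun t * Y x0 i t.

Lemma dd_ge0 : 0 <= dd. Proof. exact/ltW/dd_gt0. Qed.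

Lemma gfun_exp t : gfun t = expR (- dd * t).
Proof. by rewrite /gfun pseries_exp. Qed.

Section Bnd.
Variables (x0 : 'I_n -> R) (m M : R).
Hypothesis hx : forall j, m <= x0 j <= M.

Lemma Y_cvg i t : cvgn (pseries (cf x0 i) t).
Proof. exact: expbd_cvg dd_ge0 (cf_bd hx i) t. Qed.

Lemma Y_der i (t : R) : is_derive t 1 (Y x0 i) (\sum_j (dd * A i j) * Y x0 j t).
Proof.
have := expbd_derive dd_ge0 (cf_bd hx i) t.
move=> h; apply: is_derive_eq h _.
rewrite cf_diffs; apply: cvg_lim => //.
by apply: pseries_sum => j; exact: Y_cvg.
Qed.

Lemma g_der (t : R) : is_derive t 1 gfun (- dd * gfun t).
Proof.
have h0 : 0 <= `|- dd| by [].
have := expbd_derive h0 (expbd_exp (- dd)) t.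
move=> h; apply: is_derive_eq h _.
have -> : pseries_diffs (fun k => (- dd) ^+ k / k`!%:R) =
   (fun k => - dd * ((- dd) ^+ k / k`!%:R)).
  apply/funext => k; rewrite /pseries_diffs factS natrM exprS.
  have k0 : (k.+1%:R : R) != 0 by rewrite pnatr_eq0.
  have f0 : (k`!%:R : R) != 0 by rewrite pnatr_eq0 -lt0n fact_gt0.
  field; rewrite f0 /=.
  by rewrite addrC natr1 pnatr_eq0.
rewrite pseries_scale //.
exact: expbd_cvg h0 (expbd_exp (- dd)) t.
Qed.

Lemma x_der i (t : R) : is_derive t 1 (fun s => xt x0 s i) (- \sum_j L i j * xt x0 t j).
Proof.
have h := is_deriveM (g_der t) (Y_der i t).
apply: is_derive_eq h _.
rewrite LmulA /xt.
have -> : \sum_j A i j * (gfun t * Y x0 j t) = gfun t * \sum_j A i j * Y x0 j t.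
  by rewrite big_distrr /=; apply: eq_bigr => j _; ring.
have -> : \sum_j dd * A i j * Y x0 j t = dd * \sum_j A i j * Y x0 j t.
  by rewrite big_distrr /=; apply: eq_bigr => j _; ring.
rewrite /GRing.scale /=; ring.
Qed.

Lemma xt_traj : is_trajectory L (xt x0).
Proof.
split.
  move=> i; apply: continuous_subspaceT => t.
  apply: differentiable_continuous; apply/derivable1_diffP.
  by case: (x_der i t).
move=> i t t0; case: (x_der i t) => h1 h2; split; first exact: h1.
by rewrite derive1E.
Qed.

Lemma xt0 i : xt x0 0 i = x0 i.
Proof.
rewrite /xt /gfun /Y !pseries_at0 /cf /= !expr0 fact0 divr1 !mul1r //.
Qed.

Lemma xt_bnd t i : 0 <= t -> m <= xt x0 t i <= M.
Proof.
move=> t0.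
have d0 := dd_gt0.
have e0 : forall k, 0 <= exp_coeff (dd * t) k.
  move=> k; rewrite /exp_coeff /=; apply: divr_ge0 => //; apply: exprn_ge0.
  by apply: mulr_ge0 => //; lra.
have key : forall k, cf x0 i k * t ^+ k = vs x0 k i * exp_coeff (dd * t) k.
  by move=> k; rewrite /cf /exp_coeff /= exprMn; ring.
have cY : cvgn (series (fun k => cf x0 i k * t ^+ k)) := @Y_cvg i t.
have cE : forall a : R, cvgn (series (a *: exp_coeff (dd * t))).
  by move=> a; apply: is_cvg_seriesZ; exact: is_cvg_series_exp_coeff.
have lE : forall a : R, limn (series (a *: exp_coeff (dd * t))) = a * expR (dd * t).
  by move=> a; rewrite lim_seriesZ //; exact: is_cvg_series_exp_coeff.
have lo : m * expR (dd * t) <= Y x0 i t.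
  rewrite -lE /Y /pseries; apply: lim_series_le => // k.
  have -> : (m *: exp_coeff (dd * t)) k = m * exp_coeff (dd * t) k by [].
  have -> : [sequence cf x0 i k * t ^+ k]_k k = cf x0 i k * t ^+ k by [].
  rewrite key; apply: ler_wpM2r => //; by case/andP: (vs_bnd hx k i).
have hi : Y x0 i t <= M * expR (dd * t).
  rewrite -lE /Y /pseries; apply: lim_series_le => // k.
  have -> : (M *: exp_coeff (dd * t)) k = M * exp_coeff (dd * t) k by [].
  have -> : [sequence cf x0 i k * t ^+ k]_k k = cf x0 i k * t ^+ k by [].
  rewrite key; apply: ler_wpM2r => //; by case/andP: (vs_bnd hx k i).
have g0 : 0 < gfun t by rewrite gfun_exp expR_gt0.
have gE : gfun t * expR (dd * t) = 1.
  by rewrite gfun_exp mulNr expRN mulVf // gt_eqF // expR_gt0.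
rewrite /xt; apply/andP; split.
  rewrite -[m]mul1r -gE -mulrA [expR _ * m]mulrC.
  by apply: ler_wpM2l; [exact: ltW | exact: lo].
rewrite -[M]mul1r -gE -mulrA [expR _ * M]mulrC; by apply: ler_wpM2l; [exact: ltW | exact: hi].
Qed.

Lemma xt_q t : \sum_i q i * xt x0 t i = \sum_i q i * x0 i.
Proof.
set Q := \sum_i q i * x0 i.
have -> : \sum_i q i * xt x0 t i = gfun t * \sum_i q i * Y x0 i t.
  by rewrite big_distrr /=; apply: eq_bigr => i _; rewrite /xt; ring.
have -> : \sum_i q i * Y x0 i t =
    limn (pseries (fun k => \sum_i q i * cf x0 i k) t).
  apply/esym/cvg_lim => //; apply: pseries_sum => j; exact: Y_cvg.
have -> : (fun k => \sum_i q i * cf x0 i k) = (fun k => Q * (dd ^+ k / k`!%:R)).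
  apply/funext => k; rewrite /cf /Q -(vs_q x0 k) big_distrl /=.
  by apply: eq_bigr => i _; ring.
rewrite pseries_scale; last exact: expbd_cvg (normr_ge0 dd) (expbd_exp dd) t.
by rewrite pseries_exp gfun_exp mulrCA mulNr expRN mulVf ?mulr1 // gt_eqF // expR_gt0.
Qed.

End Bnd.

End P3b.

Section P4.
Variable R : realType.

Lemma case1 (g : R -> R) a0 m0 b0 : continuous g -> a0 < m0 -> m0 < b0 ->
  g a0 <= 0 -> g b0 <= 0 -> 0 < g m0 ->
  exists a b, [/\ a < b, g a = 0, g b = 0 & forall s, a <= s <= b -> 0 <= g s].
Proof.
move=> cg am mb ga gb gm.
have [a [ha1 ha2 ga0 hla]] := last_zero cg am ga gm.
have cg' : continuous (fun s => g (- s)).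
  move=> s; apply: continuous_comp; last exact: cg.
  exact: opp_continuous.
have [a' [hb1 hb2 gb0 hlb]] := @last_zero R (fun s => g (- s)) (- b0) (- m0) cg'
  ltac:(lra) ltac:(by rewrite /= opprK) ltac:(by rewrite /= opprK).
exists a, (- a'); split => //; first lra.
move=> s /andP[s1 s2].
have [sm|ms] := lerP s m0.
  by apply: hla; apply/andP; split.
have := hlb (- s) ltac:(apply/andP; split; lra).
by rewrite opprK.
Qed.

Lemma aff_cont (H : R -> R) (al ga : R) : continuous H ->
  continuous (fun s => H s - (al * s + ga)).
Proof.
move=> cH s.
apply: cvgB; first exact: cH.
apply: cvgD; last exact: cvg_cst.
apply: cvgMl_tmp; exact: cvg_id.
Qed.

Lemma chord (H : R -> R) : continuous H -> ~ strictly_convex H ->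
  exists a b al ga, [/\ a < b, H a = al * a + ga, H b = al * b + ga &
     forall s, a <= s <= b -> al * s + ga <= H s].
Proof.
move=> cH nsc.
have [x [y [l [xy [l01 hle]]]]] : exists x y l, x != y /\ 0 < l < 1 /\
    l * H x + (1 - l) * H y <= H (l * x + (1 - l) * y).
  apply: contrapT => hn; apply: nsc => x y xy l hl.
  rewrite ltNge; apply/negP => hle; apply: hn; exists x, y, l; split => //.
have [a0 [b0 [lam [ab [lam01 hle']]]]] : exists a0 b0 lam, a0 < b0 /\ 0 < lam < 1 /\
    lam * H a0 + (1 - lam) * H b0 <= H (lam * a0 + (1 - lam) * b0).
  case: (ltgtP x y) => [xy'|yx|e]; last by rewrite e eqxx in xy.
    by exists x, y, l.
  exists y, x, (1 - l); split => //; split; first lra.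
  have -> : 1 - (1 - l) = l by ring.
  have -> : (1 - l) * y + l * x = l * x + (1 - l) * y by ring.
  lra.
case/andP: lam01 => lam0 lam1.
set m0 := lam * a0 + (1 - lam) * b0 in hle'.
have am : a0 < m0 by rewrite /m0; nra.
have mb : m0 < b0 by rewrite /m0; nra.
pose al := (H b0 - H a0) / (b0 - a0).
pose ga := H a0 - al * a0.
have la : H a0 = al * a0 + ga by rewrite /ga; ring.
have lb : H b0 = al * b0 + ga.
  rewrite /ga /al; field; rewrite subr_eq0 gt_eqF //.
have lm : al * m0 + ga <= H m0.
  have -> : al * m0 + ga = lam * (al * a0 + ga) + (1 - lam) * (al * b0 + ga).
    by rewrite /m0; ring.
  by rewrite -la -lb.
pose g := fun s => H s - (al * s + ga).
have cg : continuous g := @aff_cont H al ga cH.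
have [gpos|gz] := ltP 0 (g m0).
  have [a [b [hab ga0 gb0 hs]]] := case1 cg am mb
     ltac:(rewrite /g; lra) ltac:(rewrite /g; lra) gpos.
  exists a, b, al, ga; split => //.
  - by move: ga0; rewrite /g; lra.
  - by move: gb0; rewrite /g; lra.
  - by move=> s hs'; have := hs s hs'; rewrite /g; lra.
have gm0 : g m0 = 0 by rewrite /g in gz *; lra.
case: (pselect (forall s, a0 <= s <= m0 -> 0 <= g s)) => hL.
  exists a0, m0, al, ga; split => //.
  - by rewrite /g in gm0; lra.
  - by move=> s hs'; have := hL s hs'; rewrite /g; lra.
case: (pselect (forall s, m0 <= s <= b0 -> 0 <= g s)) => hR.
  exists m0, b0, al, ga; split => //.
  - by rewrite /g in gm0; lra.
  - by move=> s hs'; have := hR s hs'; rewrite /g; lra.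
have [s1 [hs1 gs1]] : exists s1, a0 <= s1 <= m0 /\ g s1 < 0.
  apply: contrapT => hn; apply: hL => s hs; rewrite leNgt; apply/negP => hlt.
  by apply: hn; exists s; split.
have [r1 [hr1 gr1]] : exists r1, m0 <= r1 <= b0 /\ g r1 < 0.
  apply: contrapT => hn; apply: hR => s hs; rewrite leNgt; apply/negP => hlt.
  by apply: hn; exists s; split.
have s1m : s1 < m0.
  case/andP: hs1 => _ h; rewrite lt_neqAle h andbT; apply/negP => /eqP e.
  by rewrite e gm0 in gs1; lra.
have m1r : m0 < r1.
  case/andP: hr1 => h _; rewrite lt_neqAle h andbT; apply/negP => /eqP e.
  by rewrite -e gm0 in gr1; lra.
pose al2 := (H r1 - H s1) / (r1 - s1).
pose ga2 := H s1 - al2 * s1.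
pose g2 := fun s => H s - (al2 * s + ga2).
have cg2 : continuous g2 := @aff_cont H al2 ga2 cH.
have g2s : g2 s1 = 0 by rewrite /g2 /ga2; ring.
have g2r : g2 r1 = 0.
  rewrite /g2 /ga2 /al2; field; rewrite subr_eq0 gt_eqF //; lra.
have key : (r1 - s1) * (g2 m0 - g m0) = - ((r1 - m0) * g s1 + (m0 - s1) * g r1).
  rewrite /g2 /g /ga2 /al2; field; rewrite subr_eq0 gt_eqF //; lra.
have g2m : 0 < g2 m0.
  have : 0 < (r1 - m0) * - g s1 by apply: mulr_gt0; lra.
  have : 0 < (m0 - s1) * - g r1 by apply: mulr_gt0; lra.
  have : 0 < r1 - s1 by lra.
  nra.
have [a [b [hab ga0 gb0 hs]]] := case1 cg2 s1m m1r
   ltac:(by rewrite g2s) ltac:(by rewrite g2r) g2m.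
exists a, b, al2, ga2; split => //.
- by move: ga0; rewrite /g2; lra.
- by move: gb0; rewrite /g2; lra.
- by move=> s hs'; have := hs s hs'; rewrite /g2; lra.
Qed.

End P4.

Section P5.
Variable R : realType.
Variables (n : nat) (E : rel 'I_n) (w : 'I_n -> 'I_n -> R) (q : 'I_n -> R)
  (H : R -> R) (c beta : R).
Hypothesis wpos : forall i j, E i j -> 0 < w i j.
Hypothesis hp : left_perron (laplacian E w) q.
Hypothesis c0 : 0 < c.
Hypothesis b0 : 0 < beta.
Hypothesis Hcont : continuous H.
Hypothesis n2 : (2 <= n)%N.

Lemma lyap_conv : strict_lyapunov (laplacian E w)
    (fun v => beta * \sum_(i < n) q i * H (c * v i)) -> strictly_convex H.
Proof.
move=> hl; apply: contrapT => nsc.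
have [a [b [al [ga [ab Ha Hb hs]]]]] := chord Hcont nsc.
have n0 : (0 < n)%N by apply: leq_trans n2.
have n1 : (1 < n)%N by [].
pose i0 : 'I_n := Ordinal n0.
pose i1 : 'I_n := Ordinal n1.
pose x0 := fun i : 'I_n => if i == i0 then a / c else b / c.
have abc : a / c < b / c by rewrite ltr_pM2r // invr_gt0.
have hx : forall j, a / c <= x0 j <= b / c.
  by move=> j; rewrite /x0; case: ifP => _; apply/andP; split; lra.
pose x := xt E w x0.
have tr : is_trajectory (laplacian E w) x := xt_traj wpos hx.
have nc : ~ consensus (x 0).
  move=> [v hv]; have := hv i0; have := hv i1.
  rewrite /x !xt0 /x0 eqxx.
  have -> : (i1 == i0) = false by [].
  lra.
have := hl x tr nc 1 ltr01; rewrite /= => hlt.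
have cc : c != 0 by exact: lt0r_neq0.
have e0 : forall i, H (c * x 0 i) = al * (c * x 0 i) + ga.
  move=> i; rewrite /x xt0 /x0; case: ifP => _; rewrite mulrC divfK //.
have e1 : forall i, al * (c * x 1 i) + ga <= H (c * x 1 i).
  move=> i; apply: hs.
  have /andP[h1 h2] := xt_bnd wpos hx i (@ler01 R).
  apply/andP; split.
    by rewrite -(divfK cc a) [c * _]mulrC ler_pM2r.
  by rewrite -(divfK cc b) [c * _]mulrC ler_pM2r.
have q1 : \sum_i q i = 1 by case: hp => _ [].
have hsum : forall t, \sum_i q i * (al * (c * x t i) + ga) =
     al * c * (\sum_i q i * x t i) + ga.
  move=> t; under eq_bigr do rewrite mulrDr.
  rewrite big_split /= -big_distrl /= q1 mul1r; congr (_ + _).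
  by rewrite big_distrr /=; apply: eq_bigr => i _; ring.
have hq : \sum_i q i * x 1 i = \sum_i q i * x 0 i.
  by rewrite /x (xt_q wpos hp hx 1) (xt_q wpos hp hx 0).
have S0 : \sum_i q i * H (c * x 0 i) = al * c * (\sum_i q i * x 0 i) + ga.
  rewrite -hsum; apply: eq_bigr => i _; by rewrite e0.
have S1 : al * c * (\sum_i q i * x 0 i) + ga <= \sum_i q i * H (c * x 1 i).
  rewrite -hq -hsum; apply: ler_sum => i _; apply: ler_wpM2l; last exact: e1.
  by case: hp => _ [/(_ i) /ltW].
rewrite S0 in hlt.
have : beta * (al * c * (\sum_i q i * x 0 i) + ga) <= beta * \sum_i q i * H (c * x 1 i).
  by apply: ler_wpM2l => //; exact: ltW.
lra.
Qed.

End P5.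

Local Close Scope classical_set_scope.
Unset Implicit Arguments.
Theorem theorem1 (R : realType) (n : nat) (E : rel 'I_n)
  (w : 'I_n -> 'I_n -> R) (q : 'I_n -> R) (H : R -> R) (beta c : R) :
  (2 <= n)%N ->
  (forall i j, E i j -> 0 < w i j) ->
  \rank (laplacian E w) = n.-1 ->
  left_perron (laplacian E w) q ->
  continuous H ->
  0 < beta -> 0 < c ->
  strict_lyapunov (laplacian E w)
    (fun v => beta * \sum_(i < n) q i * H (c * v i))
  <-> strictly_convex H.
Proof.
move=> n2 wpos rk hp Hc b0 c0; split.
  exact: lyap_conv wpos hp c0 b0 Hc n2.
move=> sc.
have n0 : (0 < n)%N by apply: leq_trans n2.
have h := conv_lyap wpos hp c0 (sconv_conv sc) Hc n0 rk sc b0.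
exact: h.
Qed.
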